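(* Let $F$ be a first-order formula, let $\vec{h}$ be a tuple of distinct predicate symbols occurring in $F$, let $\vec{p}=\mathit{pred}(F)$, and let $\mathcal{S}=\mathit{pred}(F)\setminus\vec{h}$. Then a Herbrand interpretation $\mathcal{I}$ (over $\mathcal{S}$) is a model of $\exists \vec{H}\,\mathrm{SM}_{\vec{p}}[F^{\vec{h}}_{\vec{H}}]$ if and only if there is an answer set $\mathcal{J}$ of $F$ such that $\mathcal{I}=\mathcal{J}|_{\mathcal{S}}$.
   Context: For predicate symbols or predicate variables $p,q$ of the same arity $m$, $p\le q$ abbreviates $\forall\vec{x}(p(\vec{x})\to q(\vec{x}))$ with $\vec{x}$ an $m$-tuple of variables; for tuples $\vec{p}=p_1,\dots,p_n$, $\vec{q}=q_1,\dots,q_n$, $\vec{p}\le\vec{q}$ is $\bigwedge_i (p_i\le q_i)$ and $\vec{p}<\vec{q}$ is $(\vec{p}\le\vec{q})\wedge\neg(\vec{q}\le\vec{p})$. $\neg G$ abbreviates $G\to\bot$. For a first-order formula $F$ and a tuple $\vec{p}=p_1,\dots,p_n$ of distinct predicate symbols (not equality), $\mathrm{SM}_{\vec{p}}[F]:=F\wedge\neg\exists\vec{U}((\vec{U}<\vec{p})\wedge F^* )$, where $\vec{U}=U_1,\dots,U_n$ are fresh predicate variables and $F^*$ is defined recursively: $F^*=F$ for atomic $F$ not containing members of $\vec{p}$; $p_i(\vec{t})^*=U_i(\vec{t})$; $(G\otimes H)^*=G^*\otimes H^*$ for $\otimes\in\{\wedge,\vee\}$; $(G\to H)^*=(G^*\to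 H^* )\wedge(G\to H)$; $(Qx\,G)^*=Qx\,G^*$ for $Q\in\{\forall,\exists\}$. $\mathit{pred}(F)$ is the set of free predicate symbols of $F$ other than equality. An answer set of $F$ is a Herbrand model of $\mathrm{SM}_{\mathit{pred}(F)}[F]$. Herbrand interpretations are identified with sets of ground atoms; $\mathcal{J}|_{\mathcal{S}}$ denotes the restriction of $\mathcal{J}$ to the predicate symbols in $\mathcal{S}$. $F^{\vec{h}}_{\vec{H}}$ is the result of replacing each predicate symbol of $\vec{h}$ in $F$ by the corresponding predicate variable of a tuple $\vec{H}$ of fresh predicate variables of matching arities. *)

(* Defs.v *)
From mathcomp Require Import all_boot.
Set Implicit Arguments. Unset Strict Implicit. Unset Printing Implicit Defensive.

(* Symbols carry their arity: (name, arity). *)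
Definition predsym := (nat * nat)%type.   (* predicate constants (not equality) *)
Definition funsym := (nat * nat)%type.   (* function constants (object constants: arity 0) *)
Definition pvar := (nat * nat)%type.

Inductive term : Type := TVar of nat | TFn of funsym & seq term.

Inductive pref : Type := PC of predsym | PV of pvar.

Definition pref_arity (P : pref) : nat :=
  match P with PC p => p.2 | PV v => v.2 end.

Inductive form : Type :=
| FBot
| FAtom of pref & seq term
| FEq of term & term
| FAnd of form & form
| FOr of form & form
| FImp of form & form
| FAll of nat & form
| FEx of nat & form
| FAll2 of pvar & form
| FEx2 of pvar & form.

Definition FNeg (A : form) : form := FImp A FBot.
Definition FTop : form := FNeg FBot.

Fixpoint term_vars (t : term) : seq nat :=
  match t with TVar x => [:: x] | TFn _ ts => flatten (map term_vars ts) end.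

Fixpoint fv (A : form) : seq nat :=
  match A with
  | FBot => [::]
  | FAtom _ ts => flatten (map term_vars ts)
  | FEq t1 t2 => term_vars t1 ++ term_vars t2
  | FAnd A B | FOr A B | FImp A B => fv A ++ fv B
  | FAll x A | FEx x A => filter (predC1 x) (fv A)
  | FAll2 _ A | FEx2 _ A => fv A
  end.

Fixpoint first_order (A : form) : bool :=
  match A with
  | FBot | FEq _ _ => true
  | FAtom (PC _) _ => true
  | FAtom (PV _) _ => false
  | FAnd A B | FOr A B | FImp A B => first_order A && first_order B
  | FAll _ A | FEx _ A => first_order A
  | FAll2 _ _ | FEx2 _ _ => false
  end.

Fixpoint term_ok (sig : seq funsym) (t : term) : bool :=
  match t with
  | TVar _ => true
  | TFn f ts => (f \in sig) && (size ts == f.2) && all (term_ok sig) ts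
  end.

(* ground terms of the signature = elements of the Herbrand universe *)
Fixpoint hterm (sig : seq funsym) (t : term) : bool :=
  match t with
  | TVar _ => false
  | TFn f ts => (f \in sig) && (size ts == f.2) && all (hterm sig) ts
  end.

Fixpoint wf (sig : seq funsym) (A : form) : bool :=
  match A with
  | FBot => true
  | FAtom P ts => (size ts == pref_arity P) && all (term_ok sig) ts
  | FEq t1 t2 => term_ok sig t1 && term_ok sig t2
  | FAnd A B | FOr A B | FImp A B => wf sig A && wf sig B
  | FAll _ A | FEx _ A | FAll2 _ A | FEx2 _ A => wf sig A
  end.

Fixpoint preds (A : form) : seq predsym :=
  match A with
  | FBot | FEq _ _ => [::]
  | FAtom (PC p) _ => [:: p]
  | FAtom (PV _) _ => [::]
  | FAnd A B | FOr A B | FImp A B => preds A ++ preds B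
  | FAll _ A | FEx _ A | FAll2 _ A | FEx2 _ A => preds A
  end.

Definition predF (A : form) : seq predsym := undup (preds A).

Definition le_form (P Q : pref) : form :=
  let m := pref_arity P in
  let xs := map TVar (iota 0 m) in
  foldr FAll (FImp (FAtom P xs) (FAtom Q xs)) (iota 0 m).

Definition le_tuple (Ps Qs : seq pref) : form :=
  foldr FAnd FTop (map (fun PQ => le_form PQ.1 PQ.2) (zip Ps Qs)).

Definition lt_tuple (Ps Qs : seq pref) : form :=
  FAnd (le_tuple Ps Qs) (FNeg (le_tuple Qs Ps)).

Definition ren (ps : seq predsym) (Vs : seq pvar) (P : pref) : pref :=
  match P with
  | PC q => if q \in ps then PV (nth (0, 0) Vs (index q ps)) else P
  | PV _ => P
  end.

Fixpoint map_atoms (g : pref -> pref) (A : form) : form :=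
  match A with
  | FBot => FBot
  | FAtom P ts => FAtom (g P) ts
  | FEq t1 t2 => FEq t1 t2
  | FAnd A B => FAnd (map_atoms g A) (map_atoms g B)
  | FOr A B => FOr (map_atoms g A) (map_atoms g B)
  | FImp A B => FImp (map_atoms g A) (map_atoms g B)
  | FAll x A => FAll x (map_atoms g A)
  | FEx x A => FEx x (map_atoms g A)
  | FAll2 v A => FAll2 v (map_atoms g A)
  | FEx2 v A => FEx2 v (map_atoms g A)
  end.

Fixpoint star (ps : seq predsym) (Us : seq pvar) (A : form) : form :=
  match A with
  | FBot => FBot
  | FAtom P ts => FAtom (ren ps Us P) ts
  | FEq t1 t2 => FEq t1 t2
  | FAnd A B => FAnd (star ps Us A) (star ps Us B)
  | FOr A B => FOr (star ps Us A) (star ps Us B)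
  | FImp A B => FAnd (FImp (star ps Us A) (star ps Us B)) (FImp A B)
  | FAll x A => FAll x (star ps Us A)
  | FEx x A => FEx x (star ps Us A)
  | FAll2 v A => FAll2 v (star ps Us A)
  | FEx2 v A => FEx2 v (star ps Us A)
  end.

Definition Ex2s (vs : seq pvar) (A : form) : form := foldr FEx2 A vs.

(* fresh predicate variables: even indices for the U's of SM,
   odd indices for the H's used for hiding (so they never clash) *)
Definition Uvars (ps : seq predsym) : seq pvar :=
  mkseq (fun i => (2 * i, (nth (0, 0) ps i).2)) (size ps).
Definition Hvars (hs : seq predsym) : seq pvar :=
  mkseq (fun j => (2 * j + 1, (nth (0, 0) hs j).2)) (size hs).

Definition SM (ps : seq predsym) (A : form) : form :=
  FAnd A (FNeg (Ex2s (Uvars ps)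
     (FAnd (lt_tuple (map PV (Uvars ps)) (map PC ps)) (star ps (Uvars ps) A)))).

Definition hidden_SM (A : form) (hs : seq predsym) : form :=
  Ex2s (Hvars hs) (map_atoms (ren hs (Hvars hs)) (SM (predF A) A)).

Definition interp := predsym -> seq term -> Prop.   (* a set of ground atoms *)
Definition pval := pvar -> seq term -> Prop.

Fixpoint eval (env : nat -> term) (t : term) : term :=
  match t with TVar x => env x | TFn f ts => TFn f (map (eval env) ts) end.

Definition upd_env (env : nat -> term) (x : nat) (t : term) : nat -> term :=
  fun y => if y == x then t else env y.
Definition upd_pv (nu : pval) (v : pvar) (R : seq term -> Prop) : pval :=
  fun w => if w == v then R else nu w.

Definition rel_ok (sig : seq funsym) (m : nat) (R : seq term -> Prop) : Prop :=
  forall ts, R ts -> size ts = m /\ all (hterm sig) ts.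

Fixpoint sat (sig : seq funsym) (I : interp) (nu : pval) (env : nat -> term)
    (A : form) : Prop :=
  match A with
  | FBot => False
  | FAtom (PC p) ts => I p (map (eval env) ts)
  | FAtom (PV v) ts => nu v (map (eval env) ts)
  | FEq t1 t2 => eval env t1 = eval env t2
  | FAnd A B => sat sig I nu env A /\ sat sig I nu env B
  | FOr A B => sat sig I nu env A \/ sat sig I nu env B
  | FImp A B => sat sig I nu env A -> sat sig I nu env B
  | FAll x A => forall t, hterm sig t -> sat sig I nu (upd_env env x t) A
  | FEx x A => exists t, hterm sig t /\ sat sig I nu (upd_env env x t) A
  | FAll2 v A => forall R, rel_ok sig v.2 R -> sat sig I (upd_pv nu v R) env A
  | FEx2 v A => exists R, rel_ok sig v.2 R /\ sat sig I (upd_pv nu v R) env A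
  end.

Definition models (sig : seq funsym) (I : interp) (A : form) : Prop :=
  forall nu env, sat sig I nu env A.

Definition herbrand_over (sig : seq funsym) (S : seq predsym) (I : interp) : Prop :=
  forall p ts, I p ts -> p \in S /\ size ts = p.2 /\ all (hterm sig) ts.

Definition answer_set (sig : seq funsym) (A : form) (J : interp) : Prop :=
  herbrand_over sig (predF A) J /\ models sig J (SM (predF A) A).

(* Main.v *)
Require Import Defs.
From mathcomp Require Import all_boot.
From mathcomp Require Import zify.
Set Implicit Arguments. Unset Strict Implicit. Unset Printing Implicit Defensive.

Fixpoint fpv (A : form) : seq pvar :=
  match A with
  | FBot | FEq _ _ => [::]
  | FAtom (PC _) _ => [::]
  | FAtom (PV v) _ => [:: v]
  | FAnd A B | FOr A B | FImp A B => fpv A ++ fpv B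
  | FAll _ A | FEx _ A => fpv A
  | FAll2 v A | FEx2 v A => filter (predC1 v) (fpv A)
  end.

Fixpoint evenb (A : form) : bool :=
  match A with
  | FAnd A B | FOr A B | FImp A B => evenb A && evenb B
  | FAll _ A | FEx _ A => evenb A
  | FAll2 v A | FEx2 v A => ~~ odd v.1 && evenb A
  | _ => true
  end.

Fixpoint eval_ext e1 e2 (t : term) {struct t} :
  (forall x, x \in term_vars t -> e1 x = e2 x) -> eval e1 t = eval e2 t :=
  match t return (forall x, x \in term_vars t -> e1 x = e2 x) -> eval e1 t = eval e2 t with
  | TVar x => fun H => H x (mem_head x [::])
  | TFn f ts => fun H => f_equal (TFn f)
      ((fix G (us : seq term) : (forall x, x \in flatten (map term_vars us) -> e1 x = e2 x) ->
            map (eval e1) us = map (eval e2) us :=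
         match us return (forall x, x \in flatten (map term_vars us) -> e1 x = e2 x) ->
            map (eval e1) us = map (eval e2) us with
         | [::] => fun _ => erefl
         | u :: us' => fun H' => f_equal2 cons
              (@eval_ext e1 e2 u (fun x hx => H' x ltac:(by rewrite /= mem_cat hx)))
              (G us' (fun x hx => H' x ltac:(by rewrite /= mem_cat hx orbT)))
         end) ts H)
  end.

Lemma map_eval_ext e1 e2 ts :
  (forall x, x \in flatten (map term_vars ts) -> e1 x = e2 x) ->
  map (eval e1) ts = map (eval e2) ts.
Proof.
elim: ts => [|u us IH] //= H.
rewrite (eval_ext (t:=u) (e1:=e1) (e2:=e2)) ?IH // => x hx; apply: H;
  by rewrite mem_cat hx ?orbT.
Qed.

Lemma sat_ext sig I A : forall nu1 nu2 env1 env2,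
  (forall v, v \in fpv A -> nu1 v = nu2 v) ->
  (forall x, x \in fv A -> env1 x = env2 x) ->
  (sat sig I nu1 env1 A <-> sat sig I nu2 env2 A).
Proof.
elim: A => [|[p|v] ts|t1 t2|A IHA B IHB|A IHA B IHB|A IHA B IHB|x A IHA|x A IHA|v A IHA|v A IHA]
  nu1 nu2 env1 env2 Hnu Henv /=.
- done.
- by rewrite (map_eval_ext Henv).
- by rewrite (map_eval_ext Henv) (Hnu v) ?inE.
- by rewrite (eval_ext (e1:=env1) (e2:=env2) (t:=t1)) ?(eval_ext (e1:=env1) (e2:=env2) (t:=t2)) //
    => y hy; apply: Henv; rewrite mem_cat hy ?orbT.
- have HA := IHA nu1 nu2 env1 env2 (fun v hv => Hnu v ltac:(by rewrite mem_cat hv))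
      (fun v hv => Henv v ltac:(by rewrite mem_cat hv)).
  have HB := IHB nu1 nu2 env1 env2 (fun v hv => Hnu v ltac:(by rewrite mem_cat hv orbT))
      (fun v hv => Henv v ltac:(by rewrite mem_cat hv orbT)).
  tauto.
- have HA := IHA nu1 nu2 env1 env2 (fun v hv => Hnu v ltac:(by rewrite mem_cat hv))
      (fun v hv => Henv v ltac:(by rewrite mem_cat hv)).
  have HB := IHB nu1 nu2 env1 env2 (fun v hv => Hnu v ltac:(by rewrite mem_cat hv orbT))
      (fun v hv => Henv v ltac:(by rewrite mem_cat hv orbT)).
  tauto.
- have HA := IHA nu1 nu2 env1 env2 (fun v hv => Hnu v ltac:(by rewrite mem_cat hv))
      (fun v hv => Henv v ltac:(by rewrite mem_cat hv)).
  have HB := IHB nu1 nu2 env1 env2 (fun v hv => Hnu v ltac:(by rewrite mem_cat hv orbT))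
      (fun v hv => Henv v ltac:(by rewrite mem_cat hv orbT)).
  tauto.
- have key : forall t, sat sig I nu1 (upd_env env1 x t) A <-> sat sig I nu2 (upd_env env2 x t) A.
    move=> t; apply: IHA => // y H; rewrite /upd_env; case: ifP => // /negbT ne.
    by apply: Henv; rewrite mem_filter /= ne H.
  by split=> H t Ht; apply/key; apply: H.
- have key : forall t, sat sig I nu1 (upd_env env1 x t) A <-> sat sig I nu2 (upd_env env2 x t) A.
    move=> t; apply: IHA => // y H; rewrite /upd_env; case: ifP => // /negbT ne.
    by apply: Henv; rewrite mem_filter /= ne H.
  by split=> -[t [Ht H]]; exists t; split=> //; apply/key.
- have key : forall R, sat sig I (upd_pv nu1 v R) env1 A <-> sat sig I (upd_pv nu2 v R) env2 A.
    move=> R; apply: IHA => // w H; rewrite /upd_pv; case: ifP => // /negbT ne.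
    by apply: Hnu; rewrite mem_filter /= ne H.
  by split=> H R HR; apply/key; apply: H.
- have key : forall R, sat sig I (upd_pv nu1 v R) env1 A <-> sat sig I (upd_pv nu2 v R) env2 A.
    move=> R; apply: IHA => // w H; rewrite /upd_pv; case: ifP => // /negbT ne.
    by apply: Hnu; rewrite mem_filter /= ne H.
  by split=> -[R [HR H]]; exists R; split=> //; apply/key.
Qed.

Lemma sat_Ex2s sig I vs B nu env :
  sat sig I nu env (Ex2s vs B) <->
  exists nu', (forall v, v \notin vs -> nu' v = nu v) /\
    (forall v, v \in vs -> rel_ok sig v.2 (nu' v)) /\ sat sig I nu' env B.
Proof.
elim: vs nu => [|v vs IH] nu /=.
  split; first by move=> H; exists nu.
  case=> nu' [E [_ H]].
  have HH : sat sig I nu env B <-> sat sig I nu' env B by apply: sat_ext => // w _; rewrite E.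
  by apply/HH.
split.
- case=> R [HR /IH [nu' [E [Hr H]]]]; exists nu'; split; last split => //.
  + move=> w; rewrite inE negb_or => /andP [ne nw]; rewrite E // /upd_pv.
    by rewrite (negbTE ne).
  + move=> w; rewrite inE; case: (boolP (w \in vs)) => [/Hr //|nw]; rewrite orbF => /eqP Ew; subst w.
    rewrite E // /upd_pv; by case: (v =P v).
- case=> nu' [E [Hr H]]; exists (nu' v); split; first by apply: Hr; rewrite mem_head.
  apply/IH; exists nu'; split; last split => //.
  + move=> w nw; rewrite /upd_pv; case: eqP => [-> //|ne].
    by apply: E; rewrite inE negb_or nw andbT; apply/eqP.
  + by move=> w hw; apply: Hr; rewrite inE hw orbT.
Qed.

Definition hv (h : seq predsym) (p : predsym) : pvar := nth (0,0) (Hvars h) (index p h).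

Lemma hv_mem h p : p \in h -> hv h p \in Hvars h.
Proof. by move=> Hp; rewrite /hv; apply: mem_nth; rewrite size_mkseq index_mem. Qed.

Lemma hv_eq h p : p \in h -> hv h p = (2 * index p h + 1, p.2).
Proof. by move=> Hp; rewrite /hv /Hvars nth_mkseq ?index_mem // nth_index. Qed.

Lemma hv_odd h p : p \in h -> odd (hv h p).1.
Proof. by move=> Hp; rewrite hv_eq //= oddD oddM. Qed.

Lemma sat_ren sig I J h A : evenb A -> forall nu env,
  (forall p ts, p \in h -> (J p ts <-> nu (hv h p) ts)) ->
  (forall p ts, p \notin h -> (J p ts <-> I p ts)) ->
  (sat sig I nu env (map_atoms (ren h (Hvars h)) A) <-> sat sig J nu env A).
Proof.
elim: A => [|[p|v] ts|t1 t2|A IHA B IHB|A IHA B IHB|A IHA B IHB|x A IHA|x A IHA|v A IHA|v A IHA]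
  //= Hev nu env Hh Hn.
- rewrite /ren; case: ifP => Hp /=.
  + by symmetry; apply: Hh.
  + by symmetry; apply: Hn; rewrite Hp.
- move/andP: Hev => [HA HB]; have := IHA HA nu env Hh Hn; have := IHB HB nu env Hh Hn; tauto.
- move/andP: Hev => [HA HB]; have := IHA HA nu env Hh Hn; have := IHB HB nu env Hh Hn; tauto.
- move/andP: Hev => [HA HB]; have := IHA HA nu env Hh Hn; have := IHB HB nu env Hh Hn; tauto.
- have key := fun t => IHA Hev nu (upd_env env x t) Hh Hn.
  by split=> H t Ht; apply/key; apply: H.
- have key := fun t => IHA Hev nu (upd_env env x t) Hh Hn.
  by split=> -[t [Ht H]]; exists t; split=> //; apply/key.
- move/andP: Hev => [Hv HA].
  have key : forall R, sat sig I (upd_pv nu v R) env (map_atoms (ren h (Hvars h)) A)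
                  <-> sat sig J (upd_pv nu v R) env A.
    move=> R; apply: IHA => // p ts Hp; rewrite /upd_pv; case: eqP => [E|_]; last exact: Hh.
    by move: Hv; rewrite -E hv_odd.
  by split=> H R HR; apply/key; apply: H.
- move/andP: Hev => [Hv HA].
  have key : forall R, sat sig I (upd_pv nu v R) env (map_atoms (ren h (Hvars h)) A)
                  <-> sat sig J (upd_pv nu v R) env A.
    move=> R; apply: IHA => // p ts Hp; rewrite /upd_pv; case: eqP => [E|_]; last exact: Hh.
    by move: Hv; rewrite -E hv_odd.
  by split=> -[R [HR H]]; exists R; split=> //; apply/key.
Qed.

Lemma fo_fpv A : first_order A -> fpv A = [::].
Proof.
elim: A => //= [[p|v] ts //|A IHA B IHB|A IHA B IHB|A IHA B IHB] /andP [HA HB];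
  by rewrite IHA ?IHB.
Qed.

Lemma fo_evenb A : first_order A -> evenb A.
Proof.
elim: A => //= [A IHA B IHB|A IHA B IHB|A IHA B IHB] /andP [HA HB];
  by rewrite IHA ?IHB.
Qed.

Lemma evenb_star ps Us A : evenb (star ps Us A) = evenb A.
Proof.
elim: A => [|P ts|t1 t2|A IHA B IHB|A IHA B IHB|A IHA B IHB|y A IHA|y A IHA|v A IHA|v A IHA] //=;
  by rewrite ?IHA ?IHB ?andbb.
Qed.

Lemma evenb_foldrAll B xs : evenb (foldr FAll B xs) = evenb B.
Proof. by elim: xs => //=. Qed.

Lemma evenb_le_tuple Ps Qs : evenb (le_tuple Ps Qs).
Proof.
rewrite /le_tuple; elim: Ps Qs => [|P Ps IH] [|Q Qs] //=.
by rewrite IH /le_form evenb_foldrAll.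
Qed.

Lemma evenb_Ex2s vs B : evenb (Ex2s vs B) = all (fun v : pvar => ~~ odd v.1) vs && evenb B.
Proof. by elim: vs => //= v vs ->; rewrite andbA. Qed.

Lemma evenb_SM ps F : first_order F -> evenb (SM ps F).
Proof.
move=> Hfo; rewrite /SM /= fo_evenb // evenb_Ex2s /= !evenb_le_tuple evenb_star fo_evenb // !andbT.
apply/allP => v /mapP [i _ ->] /=; by rewrite oddM.
Qed.

Lemma fv_star ps Us A x : x \in fv (star ps Us A) -> x \in fv A.
Proof.
elim: A x => [|P ts|t1 t2|A IHA B IHB|A IHA B IHB|A IHA B IHB|y A IHA|y A IHA|v A IHA|v A IHA] x //=.
- by rewrite !mem_cat => /orP [/IHA|/IHB] ->; rewrite ?orbT.
- by rewrite !mem_cat => /orP [/IHA|/IHB] ->; rewrite ?orbT.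
- by rewrite !mem_cat => /orP [/orP [/IHA|/IHB]|] ->; rewrite ?orbT.
- by rewrite !mem_filter => /andP [-> /IHA].
- by rewrite !mem_filter => /andP [-> /IHA].
- exact: IHA.
- exact: IHA.
Qed.

Lemma fv_foldrAll B xs x : x \in fv (foldr FAll B xs) -> x \in fv B /\ x \notin xs.
Proof.
elim: xs => [|y ys IH] //=; rewrite mem_filter => /andP [/= ne /IH [H1 H2]].
by split=> //; rewrite inE negb_or ne.
Qed.

Lemma flatten_TVar s : flatten (map term_vars (map TVar s)) = s.
Proof. by elim: s => //= x s ->. Qed.

Lemma fv_le_tuple Ps Qs x : x \notin fv (le_tuple Ps Qs).
Proof.
rewrite /le_tuple; elim: Ps Qs => [|P Ps IH] [|Q Qs] //=.
rewrite mem_cat negb_or IH andbT; apply/negP => /fv_foldrAll [] /=.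
by rewrite mem_cat !flatten_TVar orbb => ->.
Qed.

Lemma fv_Ex2s vs B : fv (Ex2s vs B) = fv B.
Proof. by elim: vs => //=. Qed.

Lemma fv_SM ps F x : fv F = [::] -> x \notin fv (SM ps F).
Proof.
move=> HF; rewrite /SM /= HF fv_Ex2s /= !mem_cat !(negbTE (fv_le_tuple _ _ _)) /=.
by rewrite orbF; apply/negP => /fv_star; rewrite HF.
Qed.

Definition pvok (Us : seq pvar) (P : pref) : bool :=
  match P with PV v => v \in Us | PC _ => true end.

Lemma fpv_star ps Us A v : size Us = size ps -> first_order A ->
  v \in fpv (star ps Us A) -> v \in Us.
Proof.
move=> HU; elim: A => [|[p|w] ts|t1 t2|A IHA B IHB|A IHA B IHB|A IHA B IHB|y A IHA|y A IHA|w A IHA|w A IHA] //=.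
- rewrite /ren; case: ifP => Hp //= _; rewrite inE => /eqP ->.
  by apply: mem_nth; rewrite HU index_mem.
- by move=> /andP [HA HB]; rewrite mem_cat => /orP [/(IHA HA)|/(IHB HB)].
- by move=> /andP [HA HB]; rewrite mem_cat => /orP [/(IHA HA)|/(IHB HB)].
- move=> /andP [HA HB]; rewrite !mem_cat (fo_fpv HA) (fo_fpv HB) /= ?orbF.
  by move=> /orP [/(IHA HA)|/(IHB HB)].
Qed.

Lemma fpv_foldrAll B xs : fpv (foldr FAll B xs) = fpv B.
Proof. by elim: xs => //=. Qed.

Lemma fpv_le_tuple Us Ps Qs v : all (pvok Us) Ps -> all (pvok Us) Qs ->
  v \in fpv (le_tuple Ps Qs) -> v \in Us.
Proof.
rewrite /le_tuple; elim: Ps Qs => [|P Ps IH] [|Q Qs] //=.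
move=> /andP [HP HPs] /andP [HQ HQs]; rewrite mem_cat => /orP [|/IH]; last exact.
rewrite /le_form fpv_foldrAll /=.
by case: P HP => [p|u] /= HP; case: Q HQ => [q|w] /= HQ; rewrite ?mem_cat ?inE //;
  try (move=> /orP []); try (move=> /eqP ->).
Qed.

Lemma fpv_Ex2s vs B v : v \in fpv (Ex2s vs B) -> v \in fpv B /\ v \notin vs.
Proof.
elim: vs => [|y ys IH] //=; rewrite mem_filter => /andP [/= ne /IH [H1 H2]].
by split=> //; rewrite inE negb_or ne.
Qed.

Lemma fpv_SM ps F v : first_order F -> v \notin fpv (SM ps F).
Proof.
move=> Hfo; rewrite /SM /= fo_fpv //= cats0; apply/negP => /fpv_Ex2s [H1 H2].
move/negP: H2; apply.
have HU : size (Uvars ps) = size ps by rewrite size_mkseq.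
have okU : all (pvok (Uvars ps)) (map PV (Uvars ps)) by rewrite all_map; apply/allP => u /=.
have okP : all (pvok (Uvars ps)) (map PC ps) by rewrite all_map; apply/allP => q /=.
move: H1; rewrite /lt_tuple /= !mem_cat ?cats0 ?orbF => /orP [/orP [|]|].
- exact: fpv_le_tuple.
- exact: fpv_le_tuple.
- exact: fpv_star.
Qed.

Theorem proposition1 (sig : seq funsym) (F : form) (h : seq predsym) (I : interp) :
  first_order F -> fv F = [::] -> wf sig F ->
  uniq h -> {subset h <= predF F} ->
  herbrand_over sig [seq p <- predF F | p \notin h] I ->
  (models sig I (hidden_SM F h) <->
   exists J, answer_set sig F J /\
     (forall p ts, I p ts <-> (p \in [seq p <- predF F | p \notin h] /\ J p ts))).
Proof.
move=> Hfo Hfv _ _ Hsub HI.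
have HfvSM : forall x, x \notin fv (SM (predF F) F) := fun x => fv_SM (predF F) x Hfv.
have HfpvSM : forall v, v \notin fpv (SM (predF F) F) := fun v => fpv_SM (predF F) v Hfo.
have HevSM : evenb (SM (predF F) F) := evenb_SM (predF F) Hfo.
split.
- move=> HM.
  have := HM (fun _ _ => False) (fun _ => TVar 0).
  rewrite /hidden_SM => /sat_Ex2s [nu1 [_ [Hrel Hsat]]].
  pose J : interp := fun p ts => if p \in h then nu1 (hv h p) ts else I p ts.
  have HJ : sat sig J nu1 (fun _ => TVar 0) (SM (predF F) F).
    have HH : forall p ts, p \in h -> (J p ts <-> nu1 (hv h p) ts) by move=> p ts Hp; rewrite /J Hp.
    have HN : forall p ts, p \notin h -> (J p ts <-> I p ts) by move=> p ts Hp; rewrite /J (negbTE Hp).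
    exact: (proj1 (@sat_ren sig I J h _ HevSM nu1 _ HH HN)) Hsat.
  exists J; split; [split|].
  + move=> p ts; rewrite /J; case: ifP => Hp.
    * move/(Hrel (hv h p) (hv_mem Hp)) => [Hs Hall]; rewrite hv_eq //= in Hs.
      by split=> //; apply: Hsub.
    * move/HI => [H1 H2]; split=> //; by move: H1; rewrite mem_filter => /andP [_ ->].
  + move=> nu env.
    have E : sat sig J nu env (SM (predF F) F) <-> sat sig J nu1 (fun _ => TVar 0) (SM (predF F) F).
      apply: sat_ext => [v|x] H; [move: (HfpvSM v)|move: (HfvSM x)]; by rewrite H.
    by apply/E.
  + move=> p ts; rewrite /J; case: ifP => Hp; split.
    * by move/HI => [H _]; move: H; rewrite mem_filter Hp.
    * by case=> H; move: H; rewrite mem_filter Hp.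
    * by move=> H; split=> //; case: (HI _ _ H).
    * by case.
- case=> J [[HJh HJm] HIJ] nu env.
  rewrite /hidden_SM; apply/sat_Ex2s.
  pose nu' : pval := fun w => if w \in Hvars h then J (nth (0,0) h w.1./2) else nu w.
  have half_eq : forall i, (2 * i + 1)./2 = i by move=> i; lia.
  exists nu'; split; [|split].
  + by move=> v /negbTE Hv; rewrite /nu' Hv.
  + move=> v Hv; rewrite /nu' Hv.
    move: Hv; rewrite /Hvars /mkseq => /mapP [i]; rewrite mem_iota => /andP [_ Hi] -> /=.
    rewrite half_eq => ts /HJh [_ [H1 H2]]; by split.
  + have HH : forall p ts, p \in h -> (J p ts <-> nu' (hv h p) ts).
      by move=> p ts Hp; rewrite /nu' (hv_mem Hp) hv_eq //= half_eq nth_index.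
    have HN : forall p ts, p \notin h -> (J p ts <-> I p ts).
      move=> p ts Hp; split.
      - move=> H; apply/HIJ; split=> //; rewrite mem_filter Hp /=.
        by case: (HJh _ _ H).
      - by move/HIJ => [].
    exact: (proj2 (@sat_ren sig I J h _ HevSM nu' env HH HN)) (HJm _ _).
Qed.
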